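(* Let $g:\mathcal A_{\mathbf X}\to\mathbb R$ satisfy $g(x)-g(y)\le S_c(y,x)$ for all $x,y\in\mathcal A_{\mathbf X}$. Then $$v(x)=\min\{g(y)+S_c(y,x):y\in\mathcal A_{\mathbf X}\},\qquad x\in\mathbf V,$$ is the unique solution of $(DFE_c)$ on $\mathbf V$ which coincides with $g$ on $\mathcal A_{\mathbf X}$.
   Context: Network $\Gamma$ (finite arcs $\mathcal E$ closed under inversion $\tilde\gamma(s)=\gamma(1-s)$, vertices $\mathbf V$, connected), Hamiltonians $H_\gamma$ continuous, coercive, quasiconvex with $\mathrm{Int}\{H_\gamma(s,\cdot)\le b\}=\{H_\gamma(s,\cdot)<b\}$, $H_{\tilde\gamma}(s,p)=H_\gamma(1-s,-p)$; $a_\gamma=\max_s\min_pH_\gamma$, $c_\gamma$ = least level admitting a periodic viscosity subsolution, $a_0=\max\{\max_{\gamma\text{ not closed}}a_\gamma,\max_{\gamma\text{ closed}}c_\gamma\}$, $\min_pH_\gamma(s,p)$ constant in $s$ whenever $a_\gamma=a_0$. Graph $\mathbf X=(\mathbf V,\mathbf E)$, bijection $\Psi:\mathbf E\to\mathcal E$, $\mathrm o(e)=\Psi(e)(0)$, $\mathrm t(e)=\Psi(e)(1)$, $-e=\Psi^{-1}(\widetilde{\Psi(e)})$, $\mathbf E_x=\{e:\mathrm o(e)=x\}$, $\sigma_a(e)=\int_0^1\max\{p:H_{\Psi(e)}(t,p)=a\}dt$. Paths $\xi=(e_1,\dots,e_M)$, $M\ge 1$, $\mathrm t(e_j)=\mathrm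 o(e_{j+1})$; cycles: $\mathrm t(e_M)=\mathrm o(e_1)$; incident on $y$ if some $e_i$ has $y$ as endpoint; $\sigma_a(\xi)=\sum\sigma_a(e_i)$; $S_a(x,y)=\inf\{\sigma_a(\xi):\xi$ path linking $x$ to $y\}$. $(DFE_a)$: $u(x)=\min_{e\in\mathbf E_x}(u(\mathrm t(e))+\sigma_a(-e))$, $x\in\mathbf V$; subsolution: $u(\mathrm t(e))-u(\mathrm o(e))\le\sigma_a(e)$ $\forall e$. Critical value $c=\min\{a\ge a_0:(DFE_a)$ has a subsolution$\}$. Projected Aubry set: $\mathcal A_{\mathbf X}=\{y\in\mathbf V:$ there is a cycle $\xi$ incident on $y$ with $\sigma_c(\xi)=0\}$ (it is nonempty). *)

(* Defs.v *)
From mathcomp Require Import all_boot.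
From Stdlib Require Import Reals ClassicalEpsilon.

Set Implicit Arguments.
Unset Strict Implicit.
Unset Printing Implicit Defensive.

Local Open Scope R_scope.

Section Graph.
Variables (V E : finType) (o t : E -> V).

Fixpoint chained (p : seq E) : Prop :=
  match p with
  | [::] => True
  | e :: p' => match p' with
               | [::] => True
               | e' :: _ => t e = o e' /\ chained p'
               end
  end.

Definition links (x y : V) (p : seq E) : Prop :=
  match p with
  | [::] => False
  | e :: p' => [/\ o e = x, t (last e p') = y & chained p]
  end.

Definition is_cycle (p : seq E) : Prop :=
  match p with
  | [::] => False
  | e :: _ => links (o e) (o e) p
  end.

Definition incident (p : seq E) (y : V) : Prop :=
  exists2 e, e \in p & (o e = y \/ t e = y).

Definition sigma_path (sig : E -> R) (p : seq E) : R :=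
  foldr (fun e acc => sig e + acc) 0 p.

Definition is_glb (P : R -> Prop) (m : R) : Prop :=
  (forall s, P s -> m <= s) /\ (forall m', (forall s, P s -> m' <= s) -> m' <= m).

Definition is_min (P : R -> Prop) (m : R) : Prop :=
  P m /\ (forall s, P s -> m <= s).

Definition Sdist (sig : E -> R) (x y : V) : R :=
  epsilon (inhabits 0)
    (is_glb (fun s => exists p, links x y p /\ s = sigma_path sig p)).

Variable neg : E -> E.

Definition dfe_subsol (sig : E -> R) (u : V -> R) : Prop :=
  forall e, u (t e) - u (o e) <= sig e.

Definition dfe_sol (sig : E -> R) (u : V -> R) : Prop :=
  forall x, is_min (fun s => exists2 e, o e = x & s = u (t e) + sig (neg e)) (u x).

Definition is_critical (sigma : R -> E -> R) (a0 c : R) : Prop :=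
  is_min (fun a => a0 <= a /\ exists u, dfe_subsol (sigma a) u) c.

Definition connected : Prop :=
  forall x y : V, x <> y -> exists p, links x y p.

Definition aubry (sig : E -> R) (y : V) : Prop :=
  exists p, [/\ is_cycle p, incident p y & sigma_path sig p = 0].

Definition vmin (sig : E -> R) (g : V -> R) (x : V) : R :=
  epsilon (inhabits 0)
    (is_min (fun s => exists2 y, aubry sig y & s = g y + Sdist sig y x)).

End Graph.

(* Main.v *)
Require Import Defs.
From mathcomp Require Import all_boot.
From Stdlib Require Import Reals Lra Classical ClassicalEpsilon.

Set Implicit Arguments.
Unset Strict Implicit.
Local Open Scope R_scope.

Lemma chained_cons2 (V E : finType) (o t : E -> V) e f p :
  chained o t (e :: f :: p) = (t e = o f /\ chained o t (f :: p)).
Proof. by []. Qed.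

Lemma chainedE (V E : finType) (o t : E -> V) e p :
  chained o t (e :: p) <-> path (fun a b => t a == o b) e p.
Proof.
elim: p e => [|f p IH] e; first by [].
rewrite chained_cons2 [path _ _ _]/=; split.
- case=> Htf H; rewrite Htf eqxx /=; exact/IH.
- case/andP=> /eqP Htf Hp; split=> //; exact/IH.
Qed.

Lemma linksE (V E : finType) (o t : E -> V) x y e p :
  links o t x y (e :: p) <-> [/\ o e = x, t (last e p) = y & path (fun a b => t a == o b) e p].
Proof.
rewrite /links; split; case=> H1 H2 H3; split=> //; exact/chainedE.
Qed.

Lemma links_single (V E : finType) (o t : E -> V) x y e :
  links o t x y [:: e] <-> o e = x /\ t e = y.
Proof. rewrite linksE; split; [by case | by case]. Qed.

Lemma links_cat (V E : finType) (o t : E -> V) x y z p q :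
  links o t x y p -> links o t y z q -> links o t x z (p ++ q).
Proof.
case: p => [|e p] //; case: q => [|f q] //.
move=> /linksE [H1 H2 H3] /linksE [H4 H5 H6].
rewrite cat_cons; apply/linksE; split=> //.
- by rewrite last_cat.
- by rewrite cat_path H3 /= H2 H4 eqxx H6.
Qed.



Lemma links_split (V E : finType) (o t : E -> V) x z p q :
  p <> [::] -> q <> [::] -> links o t x z (p ++ q) ->
  exists y, links o t x y p /\ links o t y z q.
Proof.
case: p => [|e p] //; case: q => [|f q] // _ _.
rewrite cat_cons => /linksE [H1 H2]; rewrite cat_path /= => /andP [H3 /andP [/eqP H4 H5]].
exists (t (last e p)); split; apply/linksE; split=> //.
by rewrite last_cat /= in H2.
Qed.

Lemma sigma_cat (E : finType) (s : E -> R) p q :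
  sigma_path s (p ++ q) = sigma_path s p + sigma_path s q.
Proof. elim: p => [|e p IH] /=; [ring | rewrite IH; ring]. Qed.

Lemma links_end (V E : finType) (o t : E -> V) x y p e :
  links o t x y (p ++ [:: e]) -> t e = y.
Proof.
case: p => [|f p]; first by move=> /links_single [].
move=> H; have [m [_ /links_single [_ ->]]] := @links_split _ _ o t _ _ (f :: p) [:: e] (fun h => ltac:(discriminate)) (fun h => ltac:(discriminate)) H.
done.
Qed.

Lemma sub_lb (V E : finType) (o t : E -> V) (s : E -> R) (u : V -> R) :
  (forall e, u (t e) - u (o e) <= s e) ->
  forall p x y, links o t x y p -> u y - u x <= sigma_path s p.
Proof.
move=> Hu; elim=> [|e p IH] x y //.
case: p IH => [|f p] IH.
- move=> /links_single [<- <-] /=; have := Hu e; lra.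
- move=> H; have [m [/links_single [He1 He2] H2]] :=
    @links_split _ _ o t _ _ [:: e] (f :: p) (fun h => ltac:(discriminate)) (fun h => ltac:(discriminate)) H.
  have := IH _ _ H2; have := Hu e; rewrite He1 He2.
  change (sigma_path s (e :: f :: p)) with (s e + sigma_path s (f :: p)); lra.
Qed.

Lemma glb_ex (P : R -> Prop) (b : R) :
  (exists s, P s) -> (forall s, P s -> b <= s) -> exists m, is_glb P m.
Proof.
move=> [s0 Hs0] Hb.
have Hbd : bound (fun r => P (- r)).
  exists (- b) => r Hr; have := Hb _ Hr; lra.
have Hne : exists r, P (- r) by exists (- s0); rewrite Ropp_involutive.
have [m [Hm1 Hm2]] := completeness _ Hbd Hne.
exists (- m); split.
- move=> s Hs; have Hs' : P (- - s) by rewrite Ropp_involutive.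
  have := Hm1 (- s) Hs'; lra.
- move=> m' Hm'; suff : m <= - m' by lra.
  apply: Hm2 => r Hr; have := Hm' _ Hr; lra.
Qed.

Lemma list_min (T : eqType) (l : seq T) (P : T -> Prop) (f : T -> R) :
  (exists2 x, x \in l & P x) ->
  exists x, [/\ x \in l, P x & forall y, y \in l -> P y -> f x <= f y].
Proof.
elim: l => [|a l IH]; first by case.
move=> [x Hx Px].
case: (classic (exists2 x, x \in l & P x)) => [Hl|Hl].
- have [z [Hz Pz Hmin]] := IH Hl.
  case: (classic (P a /\ f a < f z)) => [[Pa Hlt]|Hn].
  + exists a; split=> //; first exact: mem_head.
    move=> y; rewrite in_cons => /orP [/eqP -> _|Hy Py]; first lra.
    have := Hmin _ Hy Py; lra.
  + exists z; split=> //; first by rewrite in_cons Hz orbT.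
    move=> y; rewrite in_cons => /orP [/eqP -> Py|Hy Py]; last exact: Hmin.
    case: (Rle_or_lt (f z) (f a)) => // Hlt; case: Hn; tauto.
- have Pa : P a.
    move: Hx; rewrite in_cons => /orP [/eqP <- //|Hx]; case: Hl; by exists x.
  exists a; split=> //; first exact: mem_head.
  move=> y; rewrite in_cons => /orP [/eqP -> _|Hy Py]; first lra.
  case: Hl; by exists y.
Qed.
Lemma rot_links (V E : finType) (o t : E -> V) (s : E -> R) a p q :
  p <> [::] -> q <> [::] -> links o t a a (p ++ q) ->
  exists y, links o t y y (q ++ p) /\ sigma_path s (q ++ p) = sigma_path s (p ++ q)
    /\ links o t y a q.
Proof.
move=> Hp Hq H; have [y [H1 H2]] := links_split Hp Hq H.
exists y; split; first exact: links_cat H2 H1.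
split=> //; rewrite !sigma_cat; ring.
Qed.

Lemma head_o (V E : finType) (o t : E -> V) x y p :
  links o t x y p -> exists e, o e = x.
Proof. case: p => [|e p] //= [H _ _]; by exists e. Qed.

Lemma cycle_rot (V E : finType) (o t : E -> V) (s : E -> R) p y :
  is_cycle o t p -> incident o t p y ->
  exists q, links o t y y q /\ sigma_path s q = sigma_path s p.
Proof.
move=> Hc0 [e He Hy].
have [a Hc] : exists a, links o t a a p by case: p Hc0 {He} => [|e0 p0] //= H; exists (o e0).
clear Hc0; case/splitPr: He Hc => p1 p2 Hc.
case: Hy => Hy.
- case: p1 Hc => [|f p1] Hc.
  + exists (e :: p2); split=> //; rewrite -Hy.
    move: (Hc) => /linksE [H1 _ _]; by rewrite H1.
  + have [m [Hm [Hs Hm2]]] := @rot_links _ _ o t s _ (f :: p1) (e :: p2) (fun h => ltac:(discriminate)) (fun h => ltac:(discriminate)) Hc.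
    move: Hm2 => /linksE [Ho _ _]; rewrite -Hy Ho; by exists ((e :: p2) ++ f :: p1).
- case: p2 Hc => [|f p2] Hc.
  + have Hta : y = a by rewrite -Hy; exact: links_end Hc.
    by exists (p1 ++ [:: e]); rewrite Hta.
  + move: Hc; have -> : p1 ++ e :: f :: p2 = (p1 ++ [:: e]) ++ f :: p2 by rewrite -catA.
    move=> Hc.
    have Hne : p1 ++ [:: e] <> [::] by case: p1 {Hc}.
    have [m [Hm [Hs Hm2]]] := @rot_links _ _ o t s _ (p1 ++ [:: e]) (f :: p2) Hne (fun h => ltac:(discriminate)) Hc.
    have Hq : f :: p2 <> [::] by [].
    have [m' [H1 H2]] := links_split Hne Hq Hc.
    move: H2 Hm2 => /linksE [Ho _ _] /linksE [Ho' _ _].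
    have Hm' := links_end H1.
    have -> : y = m by rewrite -Hy Hm' -Ho Ho'.
    by exists ((f :: p2) ++ p1 ++ [:: e]).
Qed.

Theorem theorem6p22 (V E : finType) (o t : E -> V) (neg : E -> E)
  (sigma : R -> E -> R) (a0 c : R) (g : V -> R)
  (Hrev_inv : forall e, neg (neg e) = e)
  (Hrev_ne : forall e, neg e <> e)
  (Hrev_o : forall e, o (neg e) = t e)
  (Hconn : connected o t)
  (Hc : is_critical o t sigma a0 c)
  (HA : exists x, aubry o t (sigma c) x)
  (Hg : forall x y, aubry o t (sigma c) x -> aubry o t (sigma c) y ->
          g x - g y <= Sdist o t (sigma c) y x) :
  dfe_sol o t neg (sigma c) (vmin o t (sigma c) g)
  /\ (forall x, aubry o t (sigma c) x -> vmin o t (sigma c) g x = g x)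
  /\ (forall u, dfe_sol o t neg (sigma c) u ->
        (forall x, aubry o t (sigma c) x -> u x = g x) ->
        forall x, u x = vmin o t (sigma c) g x).
Proof.
set s := sigma c.
change (sigma c) with s in Hg.
have tneg : forall e, t (neg e) = o e by move=> e; rewrite -{2}(Hrev_inv e) Hrev_o.
case: Hc => [[_ [u0 Hu0]] _].
have out : forall a, exists e, o e = a.
  move=> a; case: HA => y [p [Hcyc _ _]].
  case: p Hcyc => [|e0 p0] // Hcyc.
  case: (classic (a = o e0)) => [->|Hne]; first by exists e0.
  have [p Hp] := Hconn _ _ Hne; exact: head_o Hp.
have pex : forall x y, exists p, links o t x y p.
  move=> x y; case: (classic (x = y)) => [<-|Hne]; last exact: Hconn.
  have [e He] := out x; exists [:: e; neg e]; apply/linksE; split=> //=.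
    by rewrite tneg.
  by rewrite Hrev_o eqxx.
have Sglb : forall x y, is_glb (fun r => exists p, links o t x y p /\ r = sigma_path s p)
                                (Sdist o t s x y).
  move=> x y; rewrite /Sdist; apply: epsilon_spec.
  have [p Hp] := pex x y.
  apply: (@glb_ex _ (u0 y - u0 x)); first by exists (sigma_path s p), p.
  move=> r [q [Hq ->]]; exact: (@sub_lb _ _ o t s u0 Hu0 q x y Hq).
have S_le : forall x y p, links o t x y p -> Sdist o t s x y <= sigma_path s p.
  move=> x y p Hp; apply: (proj1 (Sglb x y)); by exists p.
have S_ge : forall x y m, (forall p, links o t x y p -> m <= sigma_path s p) ->
                          m <= Sdist o t s x y.
  move=> x y m H; apply: (proj2 (Sglb x y)) => r [p [Hp ->]]; exact: H.
have Saub : forall y, aubry o t s y -> Sdist o t s y y <= 0.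
  move=> y [p [Hcy Hinc Hs0]]; have [q [Hq Hsq]] := cycle_rot s Hcy Hinc.
  rewrite -Hs0 -Hsq; exact: S_le Hq.
have vspec : forall x, is_min (fun r => exists2 y, aubry o t s y & r = g y + Sdist o t s y x)
                              (vmin o t s g x).
  move=> x; rewrite /vmin; apply: epsilon_spec.
  have [y0 Hy0] := HA.
  have Hw : exists2 y, y \in enum V & aubry o t s y by exists y0; rewrite ?mem_enum.
  have [y [_ Ay Hmin]] := list_min (fun y => g y + Sdist o t s y x) Hw.
  exists (g y + Sdist o t s y x); split; first by exists y.
  move=> r [z Az ->]; apply: Hmin => //; by rewrite mem_enum.
have Hpart2 : forall x, aubry o t s x -> vmin o t s g x = g x.
  move=> x Ax; have [[y Ay Hy] Hmin] := vspec x.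
  apply: Rle_antisym.
  - have := Hmin (g x + Sdist o t s x x) (ex_intro2 _ _ x Ax erefl).
    have := Saub x Ax; lra.
  - have := Hg x y Ax Ay; rewrite Hy; lra.
have vle : forall x e, o e = x -> vmin o t s g x <= vmin o t s g (t e) + s (neg e).
  move=> x e Hoe; have [[y Ay Hy] _] := vspec (t e); have [_ Hmin] := vspec x.
  have H1 : Sdist o t s y x <= Sdist o t s y (t e) + s (neg e).
    suff : Sdist o t s y x - s (neg e) <= Sdist o t s y (t e) by lra.
    apply: S_ge => p Hp.
    have He : links o t (t e) x [:: neg e] by apply/links_single; rewrite tneg.
    have := S_le _ _ _ (links_cat Hp He); rewrite sigma_cat /=; lra.
  have := Hmin _ (ex_intro2 _ _ y Ay erefl); rewrite Hy; lra.
split.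
  move=> x; split; last by move=> r [e He ->]; exact: vle.
  have [[y Ay Hy] _] := vspec x.
  have [p0 Hp0] := pex y x.
  case/lastP: p0 Hp0 => [|q e'] Hp0 //; rewrite -cats1 in Hp0.
  have Hw : exists2 f, f \in enum E & t f = x by exists e'; [rewrite mem_enum | exact: links_end Hp0].
  have [e1 [_ Hte1 Hmin]] := list_min (fun f => Sdist o t s y (o f) + s f) Hw.
  have Hge : Sdist o t s y (o e1) + s e1 <= Sdist o t s y x.
    apply: S_ge => p Hp.
    case/lastP: p Hp => [|q' f] Hp //; rewrite -cats1 in Hp *.
    have Htf := links_end Hp.
    have Hm := Hmin f ltac:(by rewrite mem_enum) Htf.
    case: q' Hp => [|h q'] Hp.
    - move: Hp => /links_single [Hof _]; rewrite Hof in Hm.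
      have := Saub y Ay; rewrite /=; lra.
    - have Hq : h :: q' <> [::] by [].
      have Hf : [:: f] <> [::] by [].
      have [m [H1 H2]] := links_split Hq Hf Hp.
      move: H2 => /links_single [Hof _]; rewrite Hof in Hm.
      have := S_le _ _ _ H1; rewrite sigma_cat /=; lra.
  have [_ Hmin2] := vspec (o e1).
  have Hv := Hmin2 _ (ex_intro2 _ _ y Ay erefl).
  have Hv2 := vle x (neg e1) ltac:(by rewrite Hrev_o).
  rewrite tneg Hrev_inv in Hv2.
  exists (neg e1); first by rewrite Hrev_o.
  rewrite tneg Hrev_inv; lra.
split; first exact: Hpart2.
move=> u Hu Hug x.
have usub : forall f, u (t f) - u (o f) <= s f.
  move=> f; have [_ Hmin] := Hu (t f).
  have := Hmin _ (ex_intro2 _ _ (neg f) (Hrev_o f) erefl); rewrite tneg Hrev_inv; lra.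
apply: Rle_antisym.
  have [[y Ay Hy] _] := vspec x; rewrite Hy -(Hug y Ay).
  suff : u x - u y <= Sdist o t s y x by lra.
  apply: S_ge => p Hp; exact: (@sub_lb _ _ o t s u usub p y x Hp).
have hasNext : forall a, exists e, o e = a /\ u a = u (t e) + s (neg e).
  move=> a; have [[e He1 He2] _] := Hu a; by exists e.
have [ne Hne] : exists ne : V -> E, forall a, o (ne a) = a /\ u a = u (t (ne a)) + s (neg (ne a)).
  exists (fun a => proj1_sig (constructive_indefinite_description _ (hasNext a))) => a.
  exact: (proj2_sig (constructive_indefinite_description _ (hasNext a))).
pose nx a := t (ne a).
pose xs k := iter k nx x.
have pathl : forall d i, exists p, links o t (xs (i + d).+1) (xs i) p /\
                         sigma_path s p = u (xs i) - u (xs (i + d).+1).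
  have edge : forall i, links o t (xs i.+1) (xs i) [:: neg (ne (xs i))] /\
                sigma_path s [:: neg (ne (xs i))] = u (xs i) - u (xs i.+1).
    move=> i; have [H1 H2] := Hne (xs i); split.
      by apply/links_single; rewrite tneg Hrev_o H1.
    rewrite /= /nx H2; lra.
  elim=> [|d IH] i; first by rewrite addn0; exists [:: neg (ne (xs i))]; exact: edge.
  have [p [Hp Hs]] := IH i.+1; have [He Hes] := edge i.
  exists (p ++ [:: neg (ne (xs i))]); rewrite addnS -addSn; split.
    exact: links_cat Hp He.
  rewrite sigma_cat Hs Hes; lra.
have cyc : forall i j : nat, ltn i j -> xs i = xs j -> aubry o t s (xs i).
  move=> i j Hij Heq.
  have [p [Hp Hs]] := pathl (subn j i.+1) i.
  move: Hp Hs; rewrite -addSn subnKC // -Heq => Hp Hs.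
  exists p; split.
  - case: p Hp {Hs} => [|e p] // Hp; move: (Hp) => /linksE [H1 _ _].
    by change (links o t (o e) (o e) (e :: p)); rewrite H1.
  - case: p Hp {Hs} => [|e p] // Hp; move: (Hp) => /linksE [H1 _ _].
    exists e; [exact: mem_head | by left].
  - rewrite Hs; lra.
have [i [j [Hij Hneq]]] : exists i j : 'I_#|V|.+1, xs i = xs j /\ i <> j.
  apply: NNPP => Hn.
  have Hinj : injective (fun k : 'I_#|V|.+1 => xs k).
    move=> a b Hab; apply: NNPP => Hab'; apply: Hn; by exists a, b.
  have := leq_card _ Hinj; rewrite card_ord ltnn //.
have [i' [j' [Hlt Heq]]] : exists i' j' : nat, ltn i' j' /\ xs i' = xs j'.
  case: (ltngtP i j) => H.
  - by exists i, j.
  - by exists j, i.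
  - by case: Hneq; apply: val_inj.
have Ay := cyc _ _ Hlt Heq.
have [_ Hmin] := vspec x.
have Hv := Hmin _ (ex_intro2 _ _ _ Ay erefl).
rewrite -(Hug _ Ay) in Hv.
case: i' {Hlt Heq} Ay Hv => [|i'] Ay Hv.
  have := Saub _ Ay; rewrite /= in Hv *; lra.
have [p [Hp Hs]] := pathl i' O.
rewrite add0n in Hp Hs; change (xs O) with x in Hp; change (xs O) with x in Hs.
have := S_le _ _ _ Hp; rewrite Hs; lra.
Qed.
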